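(* Let $S,T$ be totally ordered sets and $M\colon S\times T\to\mathbf{Vec}$ pointwise finite-dimensional such that for all $x\le x'$ in $S$, $y\le y'$ in $T$, with $a=(x,y),b=(x,y'),c=(x',y),d=(x',y')$, the sequence $0\to M_a\to M_b\oplus M_c\to M_d\to0$ (maps $(M(a\le b),M(a\le c))$ and $M(b\le d)-M(c\le d)$) is exact. Then $\ker M^{\rightarrow}\cap\ker M^{\uparrow}=0$ and $M=\operatorname{Im}M^{\leftarrow}+\operatorname{Im}M^{\downarrow}$.
   Context: For $(p_1,p_2)\in S\times T$ define subspaces of $M_{(p_1,p_2)}$: $\operatorname{Im}M^{\leftarrow}_{(p_1,p_2)}=\bigcap_{q\le p_1}\operatorname{Im}M((q,p_2)\le(p_1,p_2))$, $\operatorname{Im}M^{\downarrow}_{(p_1,p_2)}=\bigcap_{q\le p_2}\operatorname{Im}M((p_1,q)\le(p_1,p_2))$, $\ker M^{\rightarrow}_{(p_1,p_2)}=\bigcup_{q\ge p_1}\ker M((p_1,p_2)\le(q,p_2))$, $\ker M^{\uparrow}_{(p_1,p_2)}=\bigcup_{q\ge p_2}\ker M((p_1,p_2)\le(p_1,q))$. For pointwise finite-dimensional $M$ these are submodules of $M$; $\operatorname{Im}M^{\leftarrow}+\operatorname{Im}M^{\downarrow}$ is the pointwise sum. *)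

(* Defs.v *)
From HB Require Import structures.
From mathcomp Require Import all_boot all_order all_algebra.
Set Implicit Arguments. Unset Strict Implicit. Unset Printing Implicit Defensive.
Import Order.TTheory GRing.Theory.
Local Open Scope ring_scope.

(* A pointwise finite-dimensional module M : S x T -> Vec_K is encoded by a
   dimension function d (M_p = K^(d p), as row vectors) and structure maps
   M p q : 'M_(d p, d q) acting on the right (v |-> v *m M p q),
   meaningful for p <= q in the product order. *)

Definition le2 (dS dT : Order.disp_t) (S : orderType dS) (T : orderType dT)
  (p q : S * T) : bool := ((p.1 <= q.1)%O && (p.2 <= q.2)%O).

Definition is_pmod (K : fieldType) dS dT (S : orderType dS) (T : orderType dT)
  (d : S * T -> nat) (M : forall p q : S * T, 'M[K]_(d p, d q)) : Prop :=
  (forall p, M p p = 1%:M) /\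
  (forall p q r, le2 p q -> le2 q r -> M p q *m M q r = M p r).

Definition squares_exact (K : fieldType) dS dT (S : orderType dS) (T : orderType dT)
  (d : S * T -> nat) (M : forall p q : S * T, 'M[K]_(d p, d q)) : Prop :=
  forall (x x' : S) (y y' : T), (x <= x')%O -> (y <= y')%O ->
    let a := (x, y) in let b := (x, y') in let c := (x', y) in let e := (x', y') in
    (forall v : 'rV[K]_(d a), v *m M a b = 0 -> v *m M a c = 0 -> v = 0) /\
    (forall (u : 'rV[K]_(d b)) (w : 'rV[K]_(d c)),
        u *m M b e - w *m M c e = 0 ->
        exists v : 'rV[K]_(d a), u = v *m M a b /\ w = v *m M a c) /\
    (forall z : 'rV[K]_(d e),
        exists (u : 'rV[K]_(d b)) (w : 'rV[K]_(d c)), z = u *m M b e - w *m M c e).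

Section Sub.
Variables (K : fieldType) (dS dT : Order.disp_t) (S : orderType dS) (T : orderType dT)
  (d : S * T -> nat) (M : forall p q : S * T, 'M[K]_(d p, d q)).

Definition ImLeft (p : S * T) (v : 'rV[K]_(d p)) : Prop :=
  forall q : S, (q <= p.1)%O -> exists w : 'rV[K]_(d (q, p.2)), v = w *m M (q, p.2) p.

Definition ImDown (p : S * T) (v : 'rV[K]_(d p)) : Prop :=
  forall q : T, (q <= p.2)%O -> exists w : 'rV[K]_(d (p.1, q)), v = w *m M (p.1, q) p.

Definition KerRight (p : S * T) (v : 'rV[K]_(d p)) : Prop :=
  exists q : S, (p.1 <= q)%O /\ v *m M p (q, p.2) = 0.

Definition KerUp (p : S * T) (v : 'rV[K]_(d p)) : Prop :=
  exists q : T, (p.2 <= q)%O /\ v *m M p (p.1, q) = 0.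
End Sub.

(* Main.v *)
Require Import Defs.
From HB Require Import structures.
From mathcomp Require Import all_boot all_order all_algebra.
From Stdlib Require Import Classical.
Import Order.TTheory GRing.Theory.
Local Open Scope ring_scope.

Lemma stab (K : fieldType) (I : Type) (le : I -> I -> Prop) (n : nat)
  (r : I -> nat) (A : forall i, 'M[K]_(r i, n)) :
  (forall i j k, le i j -> le j k -> le i k) ->
  (forall i j, le j i -> (A j <= A i)%MS) ->
  forall i0, le i0 i0 ->
  exists i, le i i0 /\ forall j, le j i -> (A i <= A j)%MS.
Proof.
move=> letr mono i0 le0.
suff H : forall m i, le i i0 -> (\rank (A i) <= m)%N ->
  exists i, le i i0 /\ forall j, le j i -> (A i <= A j)%MS.
  exact: (H _ i0 le0 (leqnn _)).
elim=> [|m IH] i lei hr.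
- have [h|h] := classic (forall j, le j i -> (A i <= A j)%MS).
    by exists i.
  have [j hj] := not_all_ex_not _ _ h.
  have [lji nij] := imply_to_and _ _ hj.
  have := ltn_leqif (mxrank_leqif_sup (mono _ _ lji)).
  move/negP: nij => nij; rewrite (negbTE nij) => hlt.
  by move: hr; rewrite leqn0 => /eqP hr; rewrite hr in hlt.
- have [h|h] := classic (forall j, le j i -> (A i <= A j)%MS).
    by exists i.
  have [j hj] := not_all_ex_not _ _ h.
  have [lji nij] := imply_to_and _ _ hj.
  have := ltn_leqif (mxrank_leqif_sup (mono _ _ lji)).
  move/negP: nij => nij; rewrite (negbTE nij) => hlt.
  apply: (IH j (letr _ _ _ lji lei)).
  by rewrite -ltnS; apply: leq_trans hr.
Qed.

Theorem lemma5p7 (K : fieldType) (dS dT : Order.disp_t)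
  (S : orderType dS) (T : orderType dT)
  (d : S * T -> nat) (M : forall p q : S * T, 'M[K]_(d p, d q)) :
  is_pmod M -> squares_exact M ->
  (forall (p : S * T) (v : 'rV[K]_(d p)),
      KerRight M v -> KerUp M v -> v = 0) /\
  (forall (p : S * T) (v : 'rV[K]_(d p)),
      exists u w : 'rV[K]_(d p),
        ImLeft M u /\ ImDown M w /\ v = u + w).
Proof.
move=> [Mid Mcomp] sq; split.
  case=> p1 p2 v [q [hq hv]] [q' [hq' hv']] /=.
  have [inj _] := sq p1 q p2 q' hq hq'.
  exact: inj.
case=> p1 p2 v.
pose leS := fun q q' : S => (q <= q')%O /\ (q' <= p1)%O.
have [q0 [[hq0 _] stS]] := @stab K S leS (d (p1, p2)) (fun q => d (q, p2))
  (fun q => M (q, p2) (p1, p2))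
  (fun i j k '(conj a b) '(conj c e) => conj (le_trans a c) e)
  (fun i j '(conj a b) =>
      eq_ind _ (fun X => (X <= _)%MS) (submxMl _ _)
        _ (Mcomp (j, p2) (i, p2) (p1, p2) (introT andP (conj a (lexx p2)))
                (introT andP (conj b (lexx p2)))))
  p1 (conj (lexx p1) (lexx p1)).
pose leT := fun q q' : T => (q <= q')%O /\ (q' <= p2)%O.
have [r0 [[hr0 _] stT]] := @stab K T leT (d (p1, p2)) (fun q => d (p1, q))
  (fun q => M (p1, q) (p1, p2))
  (fun i j k '(conj a b) '(conj c e) => conj (le_trans a c) e)
  (fun i j '(conj a b) =>
      eq_ind _ (fun X => (X <= _)%MS) (submxMl _ _)
        _ (Mcomp (p1, j) (p1, i) (p1, p2) (introT andP (conj (lexx p1) a))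
                (introT andP (conj (lexx p1) b))))
  p2 (conj (lexx p2) (lexx p2)).
have [_ [_ surj]] := sq q0 p1 r0 p2 hq0 hr0.
have [u [w ->]] := surj v.
exists (u *m M (q0, p2) (p1, p2)), (- (w *m M (p1, r0) (p1, p2))).
split; last split; last by [].
- move=> q /= hq; apply/submxP.
  apply: submx_trans (submxMl _ _) _.
  case: (leP q q0) => hqq.
  + by apply: stS; split.
  + rewrite -(Mcomp (q0, p2) (q, p2) (p1, p2)); first exact: submxMl.
    * by rewrite /le2 /= (ltW hqq) lexx.
    * by rewrite /le2 /= hq lexx.
- move=> q /= hq; apply/submxP.
  rewrite -mulNmx; apply: submx_trans (submxMl _ _) _.
  case: (leP q r0) => hqq.
  + by apply: stT; split.
  + rewrite -(Mcomp (p1, r0) (p1, q) (p1, p2)); first exact: submxMl.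
    * by rewrite /le2 /= (ltW hqq) lexx.
    * by rewrite /le2 /= hq lexx.
Qed.
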